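(* Let $R$ be an associative ring with identity and involution $*$, and let $a\in R^{\#}\cap R^{\dagger}$. Let $\tau_a=\{a,\ a^{\#},\ (a^{\dagger})^*\}$ and $\gamma_a=\{a^{\dagger},\ a^*,\ (a^{\#})^*\}$. Then the following are equivalent: (1) $a\in R^{SEP}$; (2) $xx^{\dagger}a^2a^*a^{\dagger}\in PE(R)$ for some $x\in\gamma_a$; (3) $x^{\dagger}xa^2a^*a^{\dagger}\in PE(R)$ for some $x\in\tau_a$.
   Context: An involution on $R$ is a map $x\mapsto x^*$ with $(x^* )^*=x$, $(x+y)^*=x^*+y^*$, $(xy)^*=y^*x^*$. An element $a$ is Moore–Penrose invertible if there is $b$ with $aba=a$, $bab=b$, $(ab)^*=ab$, $(ba)^*=ba$; such $b$ is unique, denoted $a^{\dagger}$, and $R^{\dagger}$ is the set of such $a$ (all elements of $\tau_a\cup\gamma_a$ are Moore–Penrose invertible when $a\in R^{\#}\cap R^{\dagger}$). An element $a$ is group invertible if there is $b$ with $aba=a$, $bab=b$, $ab=ba$; such $b$ is unique, denoted $a^{\#}$, and $R^{\#}$ is the set of such $a$. $PE(R)=\{e\in R: e^2=e=e^*\}$ is the set of projections. For $a\in R^{\#}\cap R^{\dagger}$, $a$ is SEP if $a^*=a^{\dagger}=a^{\#}$; $R^{SEP}$ denotes the set of SEP elements. *)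

(* Defs.v *)
From mathcomp Require Import all_boot all_algebra.
Set Implicit Arguments. Unset Strict Implicit. Unset Printing Implicit Defensive.
Import GRing.Theory.
Local Open Scope ring_scope.

Definition involution (R : pzRingType) (star : R -> R) : Prop :=
  [/\ forall x, star (star x) = x,
      forall x y, star (x + y) = star x + star y &
      forall x y, star (x * y) = star y * star x].

Definition is_mp (R : pzRingType) (star : R -> R) (a b : R) : Prop :=
  [/\ a * b * a = a, b * a * b = b,
      star (a * b) = a * b & star (b * a) = b * a].

Definition is_group_inv (R : pzRingType) (a b : R) : Prop :=
  [/\ a * b * a = a, b * a * b = b & a * b = b * a].

Definition is_proj (R : pzRingType) (star : R -> R) (e : R) : Prop :=
  e * e = e /\ star e = e.

(* a is SEP: a^* = a^dagger = a^#, where ad = a^dagger and ag = a^#. *)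
Definition is_SEP (R : pzRingType) (star : R -> R) (a ad ag : R) : Prop :=
  star a = ad /\ ad = ag.

(* Main.v *)
Require Import Defs.
From mathcomp Require Import all_boot all_algebra.
Import GRing.Theory.
Local Open Scope ring_scope.

Lemma mpU (R : pzRingType) (star : R -> R) (Hstar : involution star) (x b c : R) :
  is_mp star x b -> is_mp star x c -> b = c.
Proof.
case: Hstar => ss sD sM.
move=> [b1 b2 b3 b4] [c1 c2 c3 c4].
have Sb y : y * star b * star x = y * x * b by rewrite -mulrA -sM b3 mulrA.
have Sc y : y * star c * star x = y * x * c by rewrite -mulrA -sM c3 mulrA.
have Sb' y : star x * star b * y = b * x * y by rewrite -sM b4.
have Sc' y : star x * star c * y = c * x * y by rewrite -sM c4.
have e1 : b = b * star b * star x.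
  by rewrite Sb b2.
have e2 : star x = star x * star c * star x.
  by rewrite -[in LHS]c1 !sM mulrA.
have e3 : b = b * x * c.
  by rewrite [LHS]e1 [in LHS]e2 !mulrA Sb Sc b2.
have f1 : c = star x * star c * c.
  by rewrite Sc' c2.
have f2 : star x = star x * star b * star x.
  by rewrite -[in LHS]b1 !sM mulrA.
have f3 : c = b * x * c.
  have Sc'' y : y * star x * star c = y * c * x by rewrite -mulrA -sM c4 mulrA.
  have C2 y : y * c * x * c = y * c by rewrite -!mulrA (mulrA c) c2.
  by rewrite [LHS]f1 [in LHS]f2 Sb' Sc'' C2.
by rewrite e3 -f3.
Qed.

Ltac cx h := let y := fresh "y" in move=> y; rewrite -?mulrA; congr (_ * _); rewrite ?mulrA; exact: h.

Lemma Kmain (R : pzRingType) (s : R -> R)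
    (Hstar : involution s) (a d g : R)
    (Had : is_mp s a d) (Hag : is_group_inv a g) :
  is_proj s (d * a * a ^+ 2 * s a * d) -> is_SEP s a d g.
Proof.
case: (Hstar) => ss sD sM.
case: (Had) => h1 h2 h3 h4.
case: Hag => g1 g2 g3.
have H1c : forall y, y*a*d*a = y*a by cx h1.
have H2c : forall y, y*d*a*d = y*d by cx h2.
have ggag : g*g*a = g by rewrite -mulrA -g3 mulrA g2.
have agg : a*g*g = g by rewrite g3 g2.
have gaa : g*a*a = a by rewrite -g3 g1.
have aag : a*a*g = a by rewrite -mulrA g3 mulrA g1.
have Ggagc : forall y, y*g*g*a = y*g by cx ggag.
have Gaac : forall y, y*g*a*a = y*a by cx gaa.
have Aagc : forall y, y*a*a*g = y*a by cx aag.
have a1 : s a * a * d = s a by rewrite -mulrA -h3 -sM h1.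
have A1c : forall y, y * s a * a * d = y * s a by cx a1.
have a2 : d * a * s a = s a by rewrite -h4 -sM mulrA h1.
have A2c : forall y, y * d * a * s a = y * s a by cx a2.
have DA : d * a = s a * s d by rewrite -sM h4.
have AD : a * d = s d * s a by rewrite -sM h3.
have DAc : forall y, y * s a * s d = y * d * a by cx (esym DA).
have ADc : forall y, y * s d * s a = y * a * d by cx (esym AD).
have a3 : s a * s d * d = d by rewrite -DA h2.
have a5 : s d * d * a = s d.
  by rewrite -[X in _ = s X]a3 !sM !ss mulrA.
have b1 : s d * d * a * s a = a * d by rewrite -(mulrA _ d a) DA !mulrA ADc -AD h1.
have B1c : forall y, y * s d * d * a * s a = y * a * d by cx b1.
have sdag : s d * a * g = s d by rewrite -{1}a5 Aagc a5.
have SDAGc : forall y, y * s d * a * g = y * s d by cx sdag.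
case => hp1 hp2.
rewrite expr2 !mulrA in hp1 hp2.
have hps := hp2; rewrite !sM !ss !mulrA DAc in hps.
have S1 : d*a*a*a*s a*d*d*a = d*a*a*a*s a*d.
  by rewrite -{1}hps ?mulrA H2c hps.
have T := congr1 (fun z => 1*d*g*g*a*z) S1; rewrite /= !mulrA in T.
rewrite !(H1c, Ggagc, Gaac, A2c) !mul1r in T.
have T3 := congr1 (fun z => 1 * s z * g) T; rewrite /= !sM !ss !mulrA in T3.
rewrite !SDAGc !mul1r in T3.
have T3c : forall y, y * s a * s d * s d = y * s d by cx T3.
have T4 := congr1 s T3; rewrite !sM !ss mulrA in T4.
have E : 1*a*d*a = 1*s a*s d*s d*d*a*s a*a by rewrite T3c B1c.
rewrite !(DAc, B1c, H1c) !mul1r in E.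
have T5 : d*a*a = a by rewrite -E.
have T5c : forall y, y*d*a*a = y*a by cx T5.
have T6 : d*a = a*g.
  by transitivity (d*a*a*g); [rewrite Aagc | rewrite T5].
have T7 : d = g by rewrite -{1}T4 -mulrA T6 mulrA T6 agg.
subst g.
have T8 := congr1 (fun z => 1*d*d*z) hp1; rewrite /= !mulrA in T8.
rewrite !(T5c, Ggagc, A2c) in T8.
have GAc : forall y, y*d*a = y*a*d by cx (esym g3).
have T9 := congr1 (fun z => z*a) T8; rewrite /= !GAc !A1c !mul1r in T9.
have T10 := congr1 s T9; rewrite !sM !ss mulrA in T10.
have M : is_mp s a (s a) by split; rewrite ?sM ?ss.
by split; [exact: (@mpU _ _ Hstar a (s a) d M Had) | ].
Qed.

Lemma pA (R : pzRingType) (s : R -> R) (Hstar : involution s) (e f : R) :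
  s e = e -> s f = f -> f * e = e -> e * f = f -> e = f.
Proof.
case: Hstar => ss sD sM se sf fe ef.
by rewrite -se -fe sM se sf ef.
Qed.

Lemma pB (R : pzRingType) (s : R -> R) (Hstar : involution s) (e f : R) :
  s e = e -> s f = f -> e * f = e -> f * e = f -> e = f.
Proof.
case: Hstar => ss sD sM se sf ef fe.
by rewrite -se -ef sM se sf fe.
Qed.

Lemma caseL (R : pzRingType) (s : R -> R)
    (Hstar : involution s) (a d g : R)
    (Had : is_mp s a d) (Hag : is_group_inv a g) :
  (forall x xd, x \in [:: d; s a; s g] -> is_mp s x xd -> x * xd = d * a) /\
  (forall x xd, x \in [:: a; g; s d] -> is_mp s x xd -> xd * x = d * a).
Proof.
case: (Hstar) => ss sD sM.
case: (Had) => h1 h2 h3 h4.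
case: Hag => g1 g2 g3.
have H1c : forall y, y*a*d*a = y*a by cx h1.
have ggag : g*g*a = g by rewrite -mulrA -g3 mulrA g2.
have aag : a*a*g = a by rewrite -mulrA g3 mulrA g1.
have Aagc : forall y, y*a*a*g = y*a by cx aag.
have a2 : d * a * s a = s a by rewrite -h4 -sM mulrA h1.
have DA : d * a = s a * s d by rewrite -sM h4.
have a3 : s a * s d * d = d by rewrite -DA h2.
have a5 : s d * d * a = s d by rewrite -[X in _ = s X]a3 !sM !ss mulrA.
have A5c : forall y, y * s d * d * a = y * s d by cx a5.
have b4 : g*d*a = g by rewrite -{1}ggag H1c ggag.
have B4c : forall y, y*g*d*a = y*g by cx b4.
have b2 : d*a*s g = s g by rewrite -h4 -sM mulrA b4.
have b3 : s g * s a * s a = s a by rewrite -mulrA -!sM aag.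
have da2 : d*a = s g*s a*s a*s d by rewrite b3 DA.
have da3 : d*a = d*a*a*g by rewrite Aagc.
split.
- move=> x xd Hx [x1 x2 x3 x4]; move: Hx; rewrite !inE => /or3P [] /eqP Ex; subst x;
    apply: (@pA _ _ Hstar) => //.
  + by rewrite !mulrA h2.
  + by rewrite !mulrA x1.
  + by rewrite !mulrA a2.
  + by rewrite DA !mulrA x1.
  + by rewrite !mulrA b2.
  + by rewrite {1}da2 !mulrA x1 b3 -DA.
- move=> x xd Hx [x1 x2 x3 x4]; move: Hx; rewrite !inE => /or3P [] /eqP Ex; subst x;
    apply: (@pB _ _ Hstar) => //.
  + by rewrite !mulrA H1c.
  + have X1c : forall y, y * a * xd * a = y * a by cx x1.
    by rewrite !mulrA X1c.
  + by rewrite !mulrA B4c.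
  + have X1c : forall y, y * g * xd * g = y * g by cx x1.
    by rewrite {1}da3 !mulrA X1c Aagc.
  + by rewrite !mulrA A5c.
  + have X1c : forall y, y * s d * xd * s d = y * s d by cx x1.
    by rewrite DA !mulrA X1c.
Qed.

Theorem corollary2p6 (R : pzRingType) (star : R -> R)
    (Hstar : involution star) (a ad ag : R)
    (Had : is_mp star a ad) (Hag : is_group_inv a ag) :
  (is_SEP star a ad ag <->
     exists2 x, x \in [:: ad; star a; star ag] &
       exists2 xd, is_mp star x xd &
         is_proj star (x * xd * a ^+ 2 * star a * ad)) /\
  (is_SEP star a ad ag <->
     exists2 x, x \in [:: a; ag; star ad] &
       exists2 xd, is_mp star x xd &
         is_proj star (xd * x * a ^+ 2 * star a * ad)).
Proof.
case: (Hstar) => ss sD sM.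
case: (Had) => h1 h2 h3 h4.
case: (Hag) => g1 g2 g3.
have [C2 C3] := @caseL _ _ Hstar a ad ag Had Hag.
have K := @Kmain _ _ Hstar a ad ag Had Hag.
have fwd : is_SEP star a ad ag -> is_proj star (ad * a * a ^+ 2 * star a * ad).
  case=> e1 e2.
  have gaa : ag*a*a = a by rewrite -g3 g1.
  have aag : a*a*ag = a by rewrite -mulrA g3 mulrA g1.
  rewrite expr2 !mulrA e1 e2 gaa aag.
  split; first by rewrite mulrA g1.
  by rewrite -e2 h3.
split; split.
- move=> Hs; exists ad; first by rewrite mem_head.
  by exists a; [split | exact: fwd].
- case=> x Hx [xd Hxd Hp]; apply: K.
  by rewrite -(C2 x xd).
- move=> Hs; exists a; first by rewrite mem_head.
  by exists ad; [exact: Had | exact: fwd].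
- case=> x Hx [xd Hxd Hp]; apply: K.
  by rewrite -(C3 x xd).
Qed.
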